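(* Let $n\ge3$, $k\ge0$, let $S\subseteq\mathrm{Inc}(A,B)$ be an independent set in $G_n^k$, and let $i\in[n+k]$. Then (1) $\mathrm{DFCL}(i,S)$ is a subset of $\mathrm{Inc}(A,B)$ that is independent in $G_n^k$; (2) $\mathrm{DLCF}(i,S)$ is a subset of $\mathrm{Inc}(A,B)$ that is independent in $G_n^k$; (3) $|\mathrm{DFCL}(i,S)|+|\mathrm{DLCF}(i,S)|=2|S|$.
   Context: For integers $n\ge3$, $k\ge0$, the crown $S_n^k$ is the poset with ground set $A\cup B$, $A=\{a_1,\dots,a_{n+k}\}$, $B=\{b_1,\dots,b_{n+k}\}$, indices cyclic modulo $n+k$; elements of $A$ are pairwise incomparable, as are elements of $B$, and $a_i$ is incomparable to $b_j$ when $j\in\{i,\dots,i+k\}$ (mod $n+k$), while $a_i<b_j$ otherwise. $\mathrm{Inc}(A,B)$ is the set of pairs $(a,b)\in A\times B$ with $a$ incomparable to $b$; $G_n^k$ has vertex set $\mathrm{Inc}(A,B)$ with $(a,b)$ adjacent to $(x,y)$ iff $a<y$ and $x<b$. For an independent $S$ and $i\in[n+k]$, an ordered pair $((a,b),(x,y))$ of elements of $S$ is a contraction blocking pair at $i$ if $a=a_i$, $y=b_i$, and $x<b$ in $S_n^k$. $\mathrm{FCBP}(i,S)$ is the set of $(a,b)\in S$ for which some $(x,y)\in S$ makes $((a,b),(x,y))$ a contraction blocking pair at $i$; $\mathrm{LCBP}(i,S)$ is the set of $(x,y)\in S$ for which some $(a,b)\in S$ makes $((a,b),(x,y))$ a contraction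 blocking pair at $i$. Define $\mathrm{DFCL}(i,S)=(S-\mathrm{FCBP}(i,S))\cup\{(x,b_{i-1}):(x,y)\in\mathrm{LCBP}(i,S)\}$ and $\mathrm{DLCF}(i,S)=(S-\mathrm{LCBP}(i,S))\cup\{(a_{i+1},b):(a,b)\in\mathrm{FCBP}(i,S)\}$. *)

(* Defs.v *)
From mathcomp Require Import all_boot.
Set Implicit Arguments. Unset Strict Implicit. Unset Printing Implicit Defensive.

(* Crown S_n^k with N := n + k.  Indices are 0-based ordinals 'I_N (cyclic).
   The element a_i is encoded by index i of A, b_j by index j of B.
   A pair (a_i, b_j) in A x B is encoded as (i, j) : 'I_N * 'I_N. *)

(* a_i is incomparable to b_j  iff  j in {i, ..., i+k} (mod N),
   i.e. (j - i) mod N <= k. *)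
Definition crown_inc (N k : nat) (i j : 'I_N) : bool :=
  ((j + N - i) %% N <= k)%N.

Definition crown_lt (N k : nat) (i j : 'I_N) : bool := ~~ crown_inc k i j.

Definition IncAB (N k : nat) : {set 'I_N * 'I_N} :=
  [set v | crown_inc k v.1 v.2].

Definition Gadj (N k : nat) (u v : 'I_N * 'I_N) : bool :=
  crown_lt k u.1 v.2 && crown_lt k v.1 u.2.

Definition indep (N k : nat) (S : {set 'I_N * 'I_N}) : bool :=
  (S \subset IncAB N k) && [forall u in S, forall v in S, ~~ Gadj k u v].

Definition cbp (N k : nat) (i : 'I_N) (u v : 'I_N * 'I_N) : bool :=
  [&& u.1 == i, v.2 == i & crown_lt k v.1 u.2].

Definition FCBP (N k : nat) (i : 'I_N) (S : {set 'I_N * 'I_N}) :=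
  [set u in S | [exists v in S, cbp k i u v]].

Definition LCBP (N k : nat) (i : 'I_N) (S : {set 'I_N * 'I_N}) :=
  [set v in S | [exists u in S, cbp k i u v]].

Definition DFCL (N k : nat) (i : 'I_N) (S : {set 'I_N * 'I_N}) :=
  (S :\: FCBP k i S) :|: [set (v.1, ord_pred i) | v in LCBP k i S].

Definition DLCF (N k : nat) (i : 'I_N) (S : {set 'I_N * 'I_N}) :=
  (S :\: LCBP k i S) :|: [set (ordS i, u.2) | u in FCBP k i S].

(* Main.v *)
Require Import Defs.
From mathcomp Require Import all_boot zify.
Set Implicit Arguments. Unset Strict Implicit. Unset Printing Implicit Defensive.

Ltac splitif := repeat match goal with
  | |- context [if ?c then _ else _] => let E := fresh in destruct c eqn:E
  | H : context [if ?c then _ else _] |- _ => let E := fresh in destruct c eqn:E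
  end.

Section Arith.
Variables (N k : nat) (hN : (k + 3 <= N)%N).

Lemma dE (x j : nat) : (x < N)%N -> (j < N)%N ->
  ((j + N - x) %% N = if (x <= j)%N then j - x else j + N - x)%N.
Proof.
move=> hx hj; case: ifP => h.
  by rewrite -addnBAC // modnDr modn_small //; lia.
by rewrite modn_small //; lia.
Qed.

Lemma predE (i : 'I_N) : val (ord_pred i) = if i == 0 :> nat then N.-1 else i.-1.
Proof.
rewrite /=; case: eqP => h.
  by rewrite h add0n modn_small //; lia.
have hi := ltn_ord i.
rewrite -subn1 -addnBAC; last lia.
by rewrite modnDr modn_small; lia.
Qed.

Lemma SE (i : 'I_N) : val (ordS i) = if i.+1 == N then 0 else i.+1.
Proof.
rewrite /=; case: eqP => h; first by rewrite h modnn.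
by rewrite modn_small //; have := ltn_ord i; lia.
Qed.

Lemma inc_pred (x i : 'I_N) : crown_inc k x i -> x != i -> crown_inc k x (ord_pred i).
Proof.
rewrite /crown_inc !dE ?ltn_ord // predE => h /eqP hne.
have hx := ltn_ord x; have hi := ltn_ord i.
have hne' : (x : nat) <> i by move=> E; apply: hne; apply: val_inj.
case: eqP => h0; move: h; splitif; lia.
Qed.

Lemma inc_refl (x : 'I_N) : crown_inc k x x.
Proof. by rewrite /crown_inc dE ?ltn_ord // leqnn subnn. Qed.

Lemma ne_val (x y : 'I_N) : (x != y) = ((x : nat) != y).
Proof. by []. Qed.

Lemma inc_pred_eq (a i : 'I_N) : crown_inc k a i -> ~~ crown_inc k a (ord_pred i) -> a = i.
Proof.
rewrite /crown_inc !dE ?ltn_ord // predE => h h2.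
have hx := ltn_ord a; have hi := ltn_ord i.
apply: val_inj => /=.
case: eqP h2 => h0; move: h; splitif; lia.
Qed.

Lemma lt_i_pred (i : 'I_N) : crown_lt k i (ord_pred i).
Proof.
rewrite /crown_lt /crown_inc !dE ?ltn_ord // predE.
have hi := ltn_ord i.
case: eqP => h0; splitif; lia.
Qed.

Lemma inc_S (i b : 'I_N) : crown_inc k i b -> b != i -> crown_inc k (ordS i) b.
Proof.
rewrite ne_val /crown_inc !dE ?ltn_ord // SE => h /eqP hne.
have hx := ltn_ord b; have hi := ltn_ord i.
case: eqP => h0; move: h; splitif; lia.
Qed.

Lemma inc_S_eq (i c : 'I_N) : crown_inc k i c -> ~~ crown_inc k (ordS i) c -> c = i.
Proof.
rewrite /crown_inc !dE ?ltn_ord // SE => h h2.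
have hx := ltn_ord c; have hi := ltn_ord i.
apply: val_inj => /=.
case: eqP h2 => h0; move: h; splitif; lia.
Qed.

Lemma lt_S_i (i : 'I_N) : crown_lt k (ordS i) i.
Proof.
rewrite /crown_lt /crown_inc !dE ?ltn_ord // SE.
have hi := ltn_ord i.
case: eqP => h0; splitif; lia.
Qed.

Variables (S : {set 'I_N * 'I_N}) (hS : indep k S) (i : 'I_N).

Lemma inS u : u \in S -> crown_inc k u.1 u.2.
Proof. by case/andP: hS => /subsetP h _ /h; rewrite inE. Qed.

Lemma nadj u v : u \in S -> v \in S -> ~~ (crown_lt k u.1 v.2 && crown_lt k v.1 u.2).
Proof. by case/andP: hS => _ /forallP h uS vS; have := h u; rewrite uS /= => /forallP/(_ v); rewrite vS. Qed.

Lemma inF u : reflect (u \in S /\ u.1 = i /\ exists2 v, v \in S & v.2 = i /\ crown_lt k v.1 u.2) (u \in FCBP k i S).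
Proof.
rewrite inE; apply: (iffP andP) => [[uS /existsP [v /and3P [vS /eqP u1 /andP [/eqP v2 lt]]]]|[uS [u1 [v vS [v2 lt]]]]].
  by split=> //; split=> //; exists v.
by split=> //; apply/existsP; exists v; rewrite /cbp vS u1 v2 lt !eqxx.
Qed.

Lemma inL v : reflect (v \in S /\ v.2 = i /\ exists2 u, u \in S & u.1 = i /\ crown_lt k v.1 u.2) (v \in LCBP k i S).
Proof.
rewrite inE; apply: (iffP andP) => [[vS /existsP [u /and3P [uS /eqP u1 /andP [/eqP v2 lt]]]]|[vS [v2 [u uS [u1 lt]]]]].
  by split=> //; split=> //; exists u.
by split=> //; apply/existsP; exists u; rewrite /cbp uS u1 v2 lt !eqxx.
Qed.

Lemma L1ne v : v \in LCBP k i S -> v.1 != i.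
Proof.
case/inL => vS [v2 [u uS [u1 lt]]]; apply/eqP => v1.
have := inS uS; rewrite u1 -v1; move: lt; rewrite /crown_lt => /negP h1 h2; exact: h1 h2.
Qed.

Lemma F2ne u : u \in FCBP k i S -> u.2 != i.
Proof.
case/inF => uS [u1 [v vS [v2 lt]]]; apply/eqP => e.
have := inS vS; rewrite v2 -e; move: lt; rewrite /crown_lt => /negP h1 h2; exact: h1 h2.
Qed.

Lemma indepI (D : {set 'I_N * 'I_N}) :
  (forall w, w \in D -> crown_inc k w.1 w.2) ->
  (forall u v, u \in D -> v \in D -> ~~ (crown_lt k u.1 v.2 && crown_lt k v.1 u.2)) ->
  indep k D.
Proof.
move=> h1 h2; apply/andP; split.
  by apply/subsetP => w wD; rewrite inE h1.
by apply/forall_inP => u uD; apply/forall_inP => v vD; exact: h2.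
Qed.

Lemma cardU_disj (A B : {set 'I_N * 'I_N}) : (forall w, w \in B -> w \notin A) ->
  #|A :|: B| = #|A| + #|B|.
Proof.
move=> h; rewrite cardsU.
suff -> : A :&: B = set0 by rewrite cards0 subn0.
apply/setP => w; rewrite !inE; apply/negbTE; apply/negP => /andP [wA wB].
by move: (h w wB); rewrite wA.
Qed.

Lemma DFCL_new w : w \in [set (v.1, ord_pred i) | v in LCBP k i S] ->
  exists v, [/\ v \in LCBP k i S, w = (v.1, ord_pred i) & crown_inc k w.1 w.2].
Proof.
case/imsetP => v vL ->; exists v; split => //=.
apply: inc_pred; last exact: L1ne.
by case/inL: vL => vS [v2 _]; rewrite -v2; exact: inS.
Qed.

Lemma DFCL_notS w : w \in [set (v.1, ord_pred i) | v in LCBP k i S] -> w \notin S.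
Proof.
case/DFCL_new => v [vL -> _]; apply/negP => wS.
case/inL: vL => vS [v2 [u uS [u1 lt]]].
by have := nadj wS uS; rewrite /= lt u1 lt_i_pred.
Qed.

Lemma DFCL_key s v : s \in S -> s \notin FCBP k i S -> v \in LCBP k i S ->
  ~~ (crown_lt k v.1 s.2 && crown_lt k s.1 (ord_pred i)).
Proof.
move=> sS sF vL; apply/negP => /andP [lt1 lt2].
case/inL: (vL) => vS [v2 _].
have := nadj vS sS; rewrite lt1 /= v2 => /negbNE hinc.
have e := inc_pred_eq hinc lt2.
move/negP: sF; apply; apply/inF; split => //; split => //; exists v => //.
Qed.

Lemma indep_DFCL : indep k (DFCL k i S).
Proof.
apply: indepI.
  move=> w; rewrite in_setU => /orP [|/DFCL_new [v [_ _ h]]] //.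
  by rewrite in_setD => /andP [_ /inS].
move=> u v; rewrite !in_setU !in_setD => /orP [/andP [uF uS]|uN] /orP [/andP [vF vS]|vN].
- exact: nadj.
- case/DFCL_new: vN => x [xL -> _] /=; rewrite andbC; exact: DFCL_key.
- case/DFCL_new: uN => x [xL -> _] /=; exact: DFCL_key.
- case/DFCL_new: uN => x [xL -> h] /=.
  by case/DFCL_new: vN => y [yL -> _] /=; rewrite /crown_lt h.
Qed.

Lemma DLCF_new w : w \in [set (ordS i, u.2) | u in FCBP k i S] ->
  exists u, [/\ u \in FCBP k i S, w = (ordS i, u.2) & crown_inc k w.1 w.2].
Proof.
case/imsetP => u uF ->; exists u; split => //=.
apply: inc_S; last exact: F2ne.
by case/inF: uF => uS [u1 _]; rewrite -u1; exact: inS.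
Qed.

Lemma DLCF_notS w : w \in [set (ordS i, u.2) | u in FCBP k i S] -> w \notin S.
Proof.
case/DLCF_new => u [uF -> _]; apply/negP => wS.
case/inF: uF => uS [u1 [v vS [v2 lt]]].
by have := nadj wS vS; rewrite /= lt v2 lt_S_i.
Qed.

Lemma DLCF_key s u : s \in S -> s \notin LCBP k i S -> u \in FCBP k i S ->
  ~~ (crown_lt k (ordS i) s.2 && crown_lt k s.1 u.2).
Proof.
move=> sS sL uF; apply/negP => /andP [lt1 lt2].
case/inF: (uF) => uS [u1 _].
have := nadj uS sS; rewrite lt2 andbT u1 => /negbNE hinc.
have e := inc_S_eq hinc lt1.
move/negP: sL; apply; apply/inL; split => //; split => //; exists u => //.
Qed.

Lemma indep_DLCF : indep k (DLCF k i S).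
Proof.
apply: indepI.
  move=> w; rewrite in_setU => /orP [|/DLCF_new [v [_ _ h]]] //.
  by rewrite in_setD => /andP [_ /inS].
move=> u v; rewrite !in_setU !in_setD => /orP [/andP [uF uS]|uN] /orP [/andP [vF vS]|vN].
- exact: nadj.
- case/DLCF_new: vN => x [xL -> _] /=; rewrite andbC; exact: DLCF_key.
- case/DLCF_new: uN => x [xL -> _] /=; exact: DLCF_key.
- case/DLCF_new: uN => x [xL -> h] /=.
  by case/DLCF_new: vN => y [yL -> _] /=; rewrite /crown_lt h andbF.
Qed.

Lemma card_sum : #|DFCL k i S| + #|DLCF k i S| = 2 * #|S|.
Proof.
rewrite /DFCL /DLCF cardU_disj; last first.
  by move=> w hw; rewrite in_setD negb_and (DFCL_notS hw) orbT.
rewrite cardU_disj; last first.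
  by move=> w hw; rewrite in_setD negb_and (DLCF_notS hw) orbT.
rewrite card_in_imset; last first.
  move=> u v /inL [_ [u1 _]] /inL [_ [v1 _]] [e]; case: u v u1 v1 e => [a b] [c d] /= -> -> -> //.
rewrite card_in_imset; last first.
  move=> u v /inF [_ [u1 _]] /inF [_ [v1 _]] [e]; case: u v u1 v1 e => [a b] [c d] /= -> -> -> //.
have hF : FCBP k i S \subset S by apply/subsetP => u /inF [].
have hL : LCBP k i S \subset S by apply/subsetP => u /inL [].
rewrite !cardsD (setIidPr hF) (setIidPr hL).
have := subset_leq_card hF; have := subset_leq_card hL; move: (#|S|) (#|FCBP k i S|) (#|LCBP k i S|) => s f l *; lia.
Qed.

End Arith.

Theorem lemma4p7 (n k : nat) (hn : (3 <= n)%N)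
  (S : {set 'I_(n + k) * 'I_(n + k)}) (hS : indep k S) (i : 'I_(n + k)) :
  indep k (DFCL k i S) /\ indep k (DLCF k i S) /\
  (#|DFCL k i S| + #|DLCF k i S| = 2 * #|S|)%N.
Proof.
have hN : (k + 3 <= n + k)%N by lia.
split; first exact: indep_DFCL.
split; first exact: indep_DLCF.
exact: card_sum.
Qed.
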